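(* Let $Q\subseteq\{0,1\}^n$ be any finite set of query points (the queries of a non-adaptive deterministic algorithm). Then the distribution of the answer vector $(\mathbf f(x))_{x\in Q}$ when $\mathbf f\sim\mathcal D_{\mathrm{yes}}$ conditioned on the event $\overline{\mathsf{Bad}}$ is identical to its distribution when $\mathbf f\sim\mathcal D_{\mathrm{no}}$ conditioned on $\overline{\mathsf{Bad}}$.
   Context: Parameters: $c_1>0$ constant, $a=\sqrt n/\epsilon$, $m=n-a$, $L=0.1\cdot 2^{\sqrt m/\epsilon}$. For $B\subseteq[n]$, $x_B$ is the restriction of $x$ to $B$; $|z|$ is Hamming weight. On $\{0,1\}^A$: $h^{(+,0)}\equiv0$; $h^{(+,1)}(z)=1$ iff $|z|>a/2+c_1\sqrt a$ or $|z|<a/2-c_1\sqrt a$; $h^{(-,0)}(z)=1$ iff $|z|>a/2+c_1\sqrt a$; $h^{(-,1)}(z)=1$ iff $|z|<a/2-c_1\sqrt a$. Both $\mathcal D_{\mathrm{yes}}$ and $\mathcal D_{\mathrm{no}}$ draw: a uniform $\mathbf A\subseteq[n]$ of size $a$, $\mathbf C=[n]\setminus\mathbf A$; $\mathbf T=(\mathbf T_1,\dots,\mathbf T_L)$, each $\mathbf T_\ell\subseteq\mathbf C$ formed independently by $\sqrt m/\epsilon$ uniform draws from $\mathbf C$ with replacement; uniform $\mathbf b\in\{0,1\}^L$. Let $S_{\mathbf T}(y)=\{\ell:y_j=1\ \forall j\in\mathbf T_\ell\}$. The function is: $1$ if $|S_{\mathbf T}(x_{\mathbf C})|>1$ or $|x_{\mathbf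 C}|>m/2+0.05\epsilon\sqrt m$; otherwise $0$ if $|S_{\mathbf T}(x_{\mathbf C})|=0$ or $|x_{\mathbf C}|<m/2$; otherwise, with $S_{\mathbf T}(x_{\mathbf C})=\{\ell\}$, it equals $h^{(+,\mathbf b_\ell)}(x_{\mathbf A})$ for $\mathcal D_{\mathrm{yes}}$ and $h^{(-,\mathbf b_\ell)}(x_{\mathbf A})$ for $\mathcal D_{\mathrm{no}}$. The event $\mathsf{Bad}$ (depending on $\mathbf A,\mathbf T$ and $Q$) holds iff there exist $x,y\in Q$ and $\ell\in[L]$ with $S_{\mathbf T}(x_{\mathbf C})=S_{\mathbf T}(y_{\mathbf C})=\{\ell\}$, $|x_{\mathbf C}|,|y_{\mathbf C}|\in[m/2,m/2+0.05\epsilon\sqrt m]$, $|x_{\mathbf A}|<a/2-c_1\sqrt a$ and $|y_{\mathbf A}|>a/2+c_1\sqrt a$. *)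

(* Defs.v *)
From HB Require Import structures.
From mathcomp Require Import all_boot all_order all_algebra.
From mathcomp Require Import reals.
Set Implicit Arguments. Unset Strict Implicit. Unset Printing Implicit Defensive.
Import Order.TTheory GRing.Theory Num.Theory.
Local Open Scope ring_scope.

Definition point (n : nat) := {ffun 'I_n -> bool}.

Definition wt (n : nat) (B : {set 'I_n}) (x : point n) : nat :=
  #|[set i in B | x i]|.

(* Outcome of the random choices: (A, T, b), with T_l given as the
   sequence of its t draws (T l j = j-th draw of T_l). *)
Definition outcome (n t L : nat) : finType :=
  ({set 'I_n} * {ffun 'I_L -> {ffun 'I_t -> 'I_n}} * {ffun 'I_L -> bool})%type.

(* Probability weight of an outcome: A uniform of size a, each draw of each
   T_l uniform in C = [n] \ A (independently), b uniform in {0,1}^L. *)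
Definition weight (R : realType) (n a t L : nat) (w : outcome n t L) : R :=
  let: (A, T, b) := w in
  ((#|A| == a)%:R / ('C(n, a))%:R) *
  (\prod_(l < L) \prod_(j < t) ((T l j \notin A)%:R / (n - a)%:R)) *
  (2^-1) ^+ L.

Definition Pr (R : realType) (n a t L : nat) (E : pred (outcome n t L)) : R :=
  \sum_(w | E w) @weight R n a t L w.

Definition S_T (n t L : nat) (T : {ffun 'I_L -> {ffun 'I_t -> 'I_n}})
  (x : point n) : {set 'I_L} :=
  [set l | [forall j : 'I_t, x (T l j)]].

(* The functions h on {0,1}^A, as functions of |z| (z = x_A). *)
Definition hi (R : realType) (a : nat) (c1 : R) (w : nat) : bool :=
  (a%:R / 2 + c1 * Num.sqrt (a%:R : R) < w%:R).
Definition lo (R : realType) (a : nat) (c1 : R) (w : nat) : bool :=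
  (w%:R < a%:R / 2 - c1 * Num.sqrt (a%:R : R)).

(* yes = true gives h^{(+,b)}, yes = false gives h^{(-,b)}. *)
Definition h (R : realType) (yes : bool) (b : bool) (a : nat) (c1 : R) (w : nat) : bool :=
  if yes then (if b then hi a c1 w || lo a c1 w else false)
  else (if b then lo a c1 w else hi a c1 w).

Definition f (R : realType) (yes : bool) (n a t L : nat) (eps c1 : R)
  (w : outcome n t L) (x : point n) : bool :=
  let: (A, T, b) := w in
  let C := ~: A in
  let m : R := (n - a)%:R in
  let s := S_T T x in
  if (1 < #|s|)%N || (m / 2 + (5%:R / 100%:R) * eps * Num.sqrt m < (wt C x)%:R)
  then true
  else if (#|s| == 0)%N || ((wt C x)%:R < m / 2) then false
  else match [pick l in s] with
       | Some l => @h R yes (b l) a c1 (wt A x)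
       | None => false
       end.

Definition Bad (R : realType) (n a t L : nat) (eps c1 : R)
  (Q : {set point n}) (w : outcome n t L) : bool :=
  let: (A, T, _) := w in
  let C := ~: A in
  let m : R := (n - a)%:R in
  let inrange x := (m / 2 <= (wt C x)%:R) &&
                   ((wt C x)%:R <= m / 2 + (5%:R / 100%:R) * eps * Num.sqrt m) in
  [exists x in Q, exists y in Q, exists l : 'I_L,
     [&& S_T T x == [set l], S_T T y == [set l], inrange x, inrange y,
         lo a c1 (wt A x) & hi a c1 (wt A y)]].

Definition answer_prob (R : realType) (yes : bool) (n a t L : nat) (eps c1 : R)
  (Q : {set point n}) (v : point n -> bool) : R :=
  @Pr R n a t L (fun w => [forall x in Q, @f R yes n a t L eps c1 w x == v x]
                   && ~~ @Bad R n a t L eps c1 Q w) /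
  @Pr R n a t L (fun w => ~~ @Bad R n a t L eps c1 Q w).

(* Main.v *)
Require Import Defs.
From HB Require Import structures.
From mathcomp Require Import all_boot all_order all_algebra.
From mathcomp Require Import reals.
Import Order.TTheory GRing.Theory Num.Theory.
Local Open Scope ring_scope.

Section Aux.
Variables (R : realType) (n a t L : nat) (eps c1 : R) (Q : {set point n}).

Definition inr (A : {set 'I_n}) (x : point n) : bool :=
  let m : R := (n - a)%:R in
  (m / 2 <= (wt (~: A) x)%:R) &&
  ((wt (~: A) x)%:R <= m / 2 + (5%:R / 100%:R) * eps * Num.sqrt m).

Definition cnd (A : {set 'I_n}) (T : {ffun 'I_L -> {ffun 'I_t -> 'I_n}}) (l : 'I_L) :=
  [exists x in Q, [&& S_T T x == [set l], inr A x & lo a c1 (wt A x)]].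

Definition phi (w : outcome n t L) : outcome n t L :=
  let: (A, T, b) := w in
  (A, T, [ffun l => if cnd A T l then b l else ~~ b l]).

Lemma phiK : involutive phi.
Proof.
case=> [[A T] b] /=; congr (_, _, _); apply/ffunP=> l; rewrite !ffunE.
by case: (cnd A T l) => //; rewrite negbK.
Qed.

Lemma weight_phi w : @weight R n a t L (phi w) = @weight R n a t L w.
Proof. by case: w => [[A T] b]. Qed.

Lemma Bad_phi w : @Bad R n a t L eps c1 Q (phi w) = @Bad R n a t L eps c1 Q w.
Proof. by case: w => [[A T] b]. Qed.

Lemma f_phi w x : ~~ @Bad R n a t L eps c1 Q w -> x \in Q ->
  @f R false n a t L eps c1 (phi w) x = @f R true n a t L eps c1 w x.
Proof.
case: w => [[A T] b] /= nB xQ.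
case: ifP => // H1; case: ifP => // H2.
case: pickP => // l Hl.
rewrite ffunE.
have Hs : S_T T x == [set l].
  move/negbT: H1; rewrite negb_or -leqNgt => /andP [Hle _].
  rewrite eq_sym eqEcard sub1set Hl cards1 /=; exact: Hle.
have Hin : inr A x.
  move/negbT: H1; rewrite negb_or => /andP [_ Hu].
  move/negbT: H2; rewrite negb_or => /andP [_ Hd].
  by rewrite /inr -!leNgt in Hu Hd *; rewrite Hd Hu.
case Hc: (cnd A T l).
  have nhi : ~~ hi a c1 (wt A x).
    apply/negP => Hhi; move/negP: nB; apply.
    case/existsP: Hc => x0 /andP [x0Q /and3P [Hs0 Hin0 Hlo0]].
    apply/existsP; exists x0; rewrite x0Q; apply/existsP; exists x; rewrite xQ;
      apply/existsP; exists l; move: Hin0 Hin; rewrite /inr => /andP[-> ->] /andP[-> ->].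
      by rewrite Hs0 Hs Hlo0 Hhi.
  by rewrite /h; case: (b l); rewrite // (negbTE nhi).
have nlo : ~~ lo a c1 (wt A x).
  apply/negP => Hlo; move/negbT: Hc => /negP; apply.
  by apply/existsP; exists x; rewrite xQ Hs Hin Hlo.
by rewrite /h; case: (b l); rewrite //= (negbTE nlo) ?orbF.
Qed.

End Aux.

Theorem mainTheorem9 (R : realType) (n a t L : nat) (eps c1 : R)
  (Heps : 0 < eps) (Hc1 : 0 < c1)
  (Ha : a%:R = Num.sqrt (n%:R : R) / eps)
  (Ht : t%:R = Num.sqrt ((n - a)%:R : R) / eps)
  (HL : L = (2 ^ t %/ 10)%N)
  (Q : {set point n}) (v : point n -> bool) :
  @answer_prob R true n a t L eps c1 Q v = @answer_prob R false n a t L eps c1 Q v.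
Proof.
rewrite /answer_prob /Pr; congr (_ / _).
rewrite (reindex_inj (inv_inj (@phiK R n a t L eps c1 Q))) /=.
apply: eq_big => [w|w _]; last by rewrite weight_phi.
rewrite Bad_phi; case nB: (@Bad R n a t L eps c1 Q w) => /=; rewrite ?andbF //.
rewrite !andbT; apply: eq_forallb => x; case xQ: (x \in Q) => //=.
by rewrite -(@f_phi R n a t L eps c1 Q) ?phiK ?Bad_phi ?nB.
Qed.
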